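(* If a path $\omega\in\Omega$ is CH-random for a computable forecasting system $\varphi$, then $\min I_\textnormal{CH}(\omega)\le\liminf_{n\to\infty}\overline{\varphi}(\omega_{1:n})$ and $\limsup_{n\to\infty}\underline{\varphi}(\omega_{1:n})\le\max I_\textnormal{CH}(\omega)$.
   Context: $\mathcal{X}=\{0,1\}$; $\Omega=\mathcal{X}^{\mathbb{N}}$ (paths); $\mathbb{S}=\bigcup_{n\ge0}\mathcal X^n$ (situations), $\omega_{1:n}=(\omega_1,\dots,\omega_n)$, $\omega_{1:0}$ the empty string. $\mathcal{I}$: nonempty closed intervals $I\subseteq[0,1]$. A forecasting system is $\varphi:\mathbb S\to\mathcal I$, $\underline\varphi=\min\varphi$, $\overline\varphi=\max\varphi$; an interval forecast $I$ is identified with the constant forecasting system $s\mapsto I$. $\varphi$ is computable if there are recursive $\underline q,\overline q:\mathbb S\times\mathbb N_0\to\mathbb Q$ with $|\underline\varphi(s)-\underline q(s,n)|<2^{-n}$ and $|\overline\varphi(s)-\overline q(s,n)|<2^{-n}$. A path $\omega$ is CH-random for $\varphi$ if for every recursive selection process $S:\mathbb S\to\{0,1\}$ with $\sum_{k=0}^{n-1}S(\omega_{1:k})\to\infty$: $\liminf_n \frac{\sum_{k<n}S(\omega_{1:k})[\omega_{k+1}-\underline\varphi(\omega_{1:k})]}{\sum_{k<n}S(\omega_{1:k})}\ge0$ and $\limsup_n \frac{\sum_{k<n}S(\omega_{1:k})[\omega_{k+1}-\overline\varphi(\omega_{1:k})]}{\sum_{k<n}S(\omega_{1:k})}\le0$.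 $\mathcal I_\textnormal{CH}(\omega)=\{I\in\mathcal I:\omega\text{ CH-random for }I\}$, $I_\textnormal{CH}(\omega)=\bigcap_{I\in\mathcal I_\textnormal{CH}(\omega)}I$. *)

(* Defs.v *)
From HB Require Import structures.
From mathcomp Require Import all_boot all_order all_algebra.
From mathcomp Require Import all_classical all_reals all_analysis.
From Stdlib Require List.
Set Implicit Arguments. Unset Strict Implicit. Unset Printing Implicit Defensive.
Import Order.TTheory GRing.Theory Num.Theory.
Local Open Scope ring_scope.

Inductive prf : Type :=
  | PZero
  | PSucc
  | PProj (i : nat)
  | PComp (f : prf) (gs : list prf)
  | PRec (f g : prf)
  | PMu (f : prf).

Inductive peval : prf -> seq nat -> nat -> Prop :=
  | ev_zero xs : peval PZero xs 0
  | ev_succ x xs : peval PSucc (x :: xs) x.+1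
  | ev_proj i xs : (i < size xs)%N -> peval (PProj i) xs (nth 0%N xs i)
  | ev_comp f gs xs ys y :
      List.Forall2 (fun g yi => peval g xs yi) gs ys ->
      peval f ys y -> peval (PComp f gs) xs y
  | ev_rec0 f g xs y : peval f xs y -> peval (PRec f g) (0%N :: xs) y
  | ev_recS f g n xs r y :
      peval (PRec f g) (n :: xs) r -> peval g (n :: r :: xs) y ->
      peval (PRec f g) (n.+1 :: xs) y
  | ev_mu f xs n :
      peval f (n :: xs) 0 ->
      (forall m, (m < n)%N -> exists k, peval f (m :: xs) k.+1) ->
      peval (PMu f) xs n.

(* Standard bijective coding of situations (finite binary strings). *)
Fixpoint code_sit (s : seq bool) : nat :=
  match s with
  | [::] => 0%N
  | b :: s' => ((code_sit s').*2 + 1 + b)%N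
  end.

Definition recursive_sit (f : seq bool -> nat) : Prop :=
  exists t : prf, forall s, peval t [:: code_sit s] (f s).

Definition recursive_sit_nat (f : seq bool -> nat -> nat) : Prop :=
  exists t : prf, forall s n, peval t [:: code_sit s; n] (f s n).

(* Rational numbers given as (a - b) / (d + 1) with a, b, d naturals;
   a map q : S x N -> Q is recursive iff it admits such a representation
   with recursive a, b, d. *)
Definition ratval {R : realType} (a b d : nat) : R := (a%:R - b%:R) / (d.+1)%:R.

Definition computable_real_fun {R : realType} (g : seq bool -> R) : Prop :=
  exists a b d : seq bool -> nat -> nat,
    [/\ recursive_sit_nat a, recursive_sit_nat b, recursive_sit_nat d &
      forall s n, `|g s - ratval (a s n) (b s n) (d s n)| < 2%:R ^- n].

Definition is_interval {R : realType} (I : R * R) : Prop :=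
  0 <= I.1 /\ I.1 <= I.2 /\ I.2 <= 1.

Definition forecasting_system {R : realType} (phi : seq bool -> R * R) : Prop :=
  forall s, is_interval (phi s).

Definition computable_fs {R : realType} (phi : seq bool -> R * R) : Prop :=
  computable_real_fun (fun s => (phi s).1) /\ computable_real_fun (fun s => (phi s).2).

(* omega_{1:n} for a path omega (omega_1 = omega 0). *)
Definition path_prefix (omega : nat -> bool) (n : nat) : seq bool :=
  [seq omega i | i <- iota 0 n].

Definition selection_process (S : seq bool -> bool) : Prop :=
  recursive_sit (fun s => nat_of_bool (S s)).

Definition sel_count {R : realType} (S : seq bool -> bool) (omega : nat -> bool)
  (n : nat) : R := \sum_(k < n) (S (path_prefix omega k))%:R.

Definition sel_avg {R : realType} (S : seq bool -> bool) (omega : nat -> bool)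
  (f : seq bool -> R) (n : nat) : R :=
  (\sum_(k < n) (S (path_prefix omega k))%:R * ((omega k)%:R - f (path_prefix omega k)))
  / sel_count S omega n.

Definition CH_random {R : realType} (phi : seq bool -> R * R) (omega : nat -> bool)
  : Prop :=
  forall S, selection_process S ->
    (forall M : R, exists N, forall n, (N <= n)%N -> M <= sel_count S omega n) ->
    0 <= limn_inf (sel_avg S omega (fun s => (phi s).1)) /\
    limn_sup (sel_avg S omega (fun s => (phi s).2)) <= 0.

(* I_CH(omega) as a family of intervals, and membership in its intersection. *)
Definition ICH_family {R : realType} (omega : nat -> bool) (I : R * R) : Prop :=
  is_interval I /\ CH_random (fun _ => I) omega.

Definition in_ICH {R : realType} (omega : nat -> bool) (x : R) : Prop :=
  forall I : R * R, ICH_family omega I -> I.1 <= x <= I.2.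

(* Main.v *)
Require Import Defs.
From HB Require Import structures.
From mathcomp Require Import all_boot all_order all_algebra.
From mathcomp Require Import all_classical all_reals all_analysis.
From mathcomp Require Import lra.
Import Order.TTheory GRing.Theory Num.Theory.

Lemma pv_proj0 x xs : peval (PProj 0) (x :: xs) x.
Proof. exact: (@ev_proj 0 (x :: xs) isT). Qed.
Lemma pv_proj1 x y xs : peval (PProj 1) (x :: y :: xs) y.
Proof. exact: (@ev_proj 1 (x :: y :: xs) isT). Qed.
Lemma pv_proj2 x y z xs : peval (PProj 2) (x :: y :: z :: xs) z.
Proof. exact: (@ev_proj 2 (x :: y :: z :: xs) isT). Qed.

Lemma pv_c1 f g xs y1 z : peval g xs y1 -> peval f [:: y1] z ->
  peval (PComp f [:: g]) xs z.
Proof. by move=> h1 h2; apply: (@ev_comp _ _ _ [:: y1]) => //; constructor. Qed.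
Lemma pv_c2 f g1 g2 xs y1 y2 z : peval g1 xs y1 -> peval g2 xs y2 ->
  peval f [:: y1; y2] z -> peval (PComp f [:: g1; g2]) xs z.
Proof. by move=> h1 h2 h3; apply: (@ev_comp _ _ _ [:: y1; y2]) => //; constructor => //; constructor. Qed.

Fixpoint pcst (k : nat) : prf := if k is k'.+1 then PComp PSucc [:: pcst k'] else PZero.
Lemma pv_cst k xs : peval (pcst k) xs k.
Proof. elim: k => [|k IH] /=; first exact: ev_zero. apply: pv_c1 IH _; exact: ev_succ. Qed.

Definition padd := PRec (PProj 0) (PComp PSucc [:: PProj 1]).
Lemma pv_add n x : peval padd [:: n; x] (n + x).
Proof.
elim: n => [|n IH]; first exact/ev_rec0/pv_proj0.
apply: ev_recS IH _; apply: pv_c1; [exact: pv_proj1| exact: ev_succ].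
Qed.

Definition pmul := PRec PZero (PComp padd [:: PProj 1; PProj 2]).
Lemma pv_mul n x : peval pmul [:: n; x] (n * x).
Proof.
elim: n => [|n IH]; first exact/ev_rec0/ev_zero.
apply: ev_recS IH _; rewrite mulSn addnC.
apply: pv_c2; [exact: pv_proj1| exact: pv_proj2| exact: pv_add].
Qed.

Definition ppred := PRec PZero (PProj 0).
Lemma pv_pred n : peval ppred [:: n] n.-1.
Proof.
elim: n => [|n IH]; first exact/ev_rec0/ev_zero.
apply: ev_recS IH _; exact: pv_proj0.
Qed.

Definition psub := PRec (PProj 0) (PComp ppred [:: PProj 1]).
Lemma pv_sub n x : peval psub [:: n; x] (x - n).
Proof.
elim: n => [|n IH]; first by rewrite subn0; exact/ev_rec0/pv_proj0.
apply: ev_recS IH _; rewrite subnS; apply: pv_c1; [exact: pv_proj1|exact: pv_pred].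
Qed.

Definition psg := PRec PZero (PComp PSucc [:: PZero]).
Lemma pv_sg n : peval psg [:: n] (0 < n)%N.
Proof.
elim: n => [|n IH]; first exact/ev_rec0/ev_zero.
apply: ev_recS IH _; apply: (@pv_c1 _ _ _ 0 1); [exact: ev_zero|exact: ev_succ].
Qed.

Definition plt := PComp psg [:: PComp psub [:: PProj 0; PProj 1]].
Lemma pv_lt x y : peval plt [:: x; y] (x < y)%N.
Proof.
rewrite -subn_gt0; apply: pv_c1 (pv_sg _); apply: pv_c2; [exact: pv_proj0|exact: pv_proj1|exact: pv_sub].
Qed.

Lemma sel_true : selection_process (fun _ => true).
Proof. exists (pcst 1) => s; exact: pv_cst. Qed.

Lemma sel_rec (a b d : seq bool -> nat -> nat) N p q :
  recursive_sit_nat a -> recursive_sit_nat b -> recursive_sit_nat d ->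
  selection_process (fun s => (a s N * q.+1 < p * (d s N).+1 + b s N * q.+1)%N).
Proof.
move=> [ta Ha] [tb Hb] [td Hd].
pose arg t := PComp t [:: PProj 0; pcst N].
have Harg t f : (forall s n, peval t [:: code_sit s; n] (f s n)) ->
   forall s, peval (arg t) [:: code_sit s] (f s N).
  by move=> Ht s; apply: pv_c2; [exact: pv_proj0|exact: pv_cst|exact: Ht].
exists (PComp plt [:: PComp pmul [:: arg ta; pcst q.+1];
   PComp padd [:: PComp pmul [:: pcst p; PComp PSucc [:: arg td]];
                  PComp pmul [:: arg tb; pcst q.+1]]]) => s.
apply: pv_c2; last exact: pv_lt.
  apply: pv_c2; [exact: Harg|exact: pv_cst|exact: pv_mul].
apply: pv_c2; last exact: pv_add.
  apply: pv_c2; [exact: pv_cst| |exact: pv_mul].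
  apply: pv_c1; [exact: Harg|exact: ev_succ].
apply: pv_c2; [exact: Harg|exact: pv_cst|exact: pv_mul].
Qed.

Lemma sel_rec2 (a b d : seq bool -> nat -> nat) N p q :
  recursive_sit_nat a -> recursive_sit_nat b -> recursive_sit_nat d ->
  selection_process (fun s => (p * (d s N).+1 + b s N * q.+1 < a s N * q.+1)%N).
Proof.
move=> [ta Ha] [tb Hb] [td Hd].
pose arg t := PComp t [:: PProj 0; pcst N].
have Harg t f : (forall s n, peval t [:: code_sit s; n] (f s n)) ->
   forall s, peval (arg t) [:: code_sit s] (f s N).
  by move=> Ht s; apply: pv_c2; [exact: pv_proj0|exact: pv_cst|exact: Ht].
exists (PComp plt [:: 
   PComp padd [:: PComp pmul [:: pcst p; PComp PSucc [:: arg td]];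
                  PComp pmul [:: arg tb; pcst q.+1]];
   PComp pmul [:: arg ta; pcst q.+1]]) => s.
apply: pv_c2; last exact: pv_lt.
  apply: pv_c2; last exact: pv_add.
    apply: pv_c2; [exact: pv_cst| |exact: pv_mul].
    apply: pv_c1; [exact: Harg|exact: ev_succ].
  apply: pv_c2; [exact: Harg|exact: pv_cst|exact: pv_mul].
apply: pv_c2; [exact: Harg|exact: pv_cst|exact: pv_mul].
Qed.

Local Open Scope ring_scope.
Set Implicit Arguments.

Section LIM.
Variable R : realType.
Implicit Types (u v : nat -> R) (c K : R).

Lemma bndK u K : (forall n, `|u n| <= K) -> bounded_fun u.
Proof.
move=> h; rewrite /bounded_fun /= /bounded_near.
have hK : \forall M \near +oo, K <= M by apply: nbhs_pinfty_ge; exact: num_real.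
apply: filterS hK => M hM t _ /=; exact: le_trans (h t) hM.
Qed.

Lemma LI1 u c : bounded_fun u -> (exists N, forall n, (N <= n)%N -> c <= u n) -> c <= limn_inf u.
Proof.
move=> hb [N hN]; rewrite limn_infE //.
apply: le_trans (ub_le_sup (bounded_fun_has_ubound_infs hb) _); last by exists N.
rewrite /infs /=; apply: lb_le_inf; first by exists (u N); exists N => /=.
by move=> _ [n /= hn <-]; exact: hN.
Qed.

Lemma LI3 u e : bounded_fun u -> 0 < e -> exists N, forall n, (N <= n)%N -> limn_inf u - e < u n.
Proof.
move=> hb e0; rewrite limn_infE //.
have [_ [N _ <-] hy] : exists2 y, range (infs u) y & sup (range (infs u)) - e < y.
  by apply: sup_gt; [exists (infs u 0); exists 0|rewrite ltrBlDr ltrDl].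
exists N => n hn; apply: (lt_le_trans hy); rewrite /infs /=.
apply: ge_inf; last by exists n.
exact/has_lbound_sdrop/bounded_fun_has_lbound.
Qed.

Lemma LS1 u c : bounded_fun u -> (exists N, forall n, (N <= n)%N -> u n <= c) -> limn_sup u <= c.
Proof.
move=> hb [N hN]; rewrite limn_supE //.
have H : inf (range (sups u)) <= sups u N.
  by apply: ge_inf; [exact: bounded_fun_has_lbound_sups|exists N].
apply: le_trans H _.
rewrite /sups /=; apply: ge_sup; first by exists (u N); exists N => /=.
by move=> _ [n /= hn <-]; exact: hN.
Qed.

Lemma LS3 u e : bounded_fun u -> 0 < e -> exists N, forall n, (N <= n)%N -> u n < limn_sup u + e.
Proof.
move=> hb e0; rewrite limn_supE //.
have [_ [N _ <-] hy] : exists2 y, range (sups u) y & y < inf (range (sups u)) + e.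
  by apply: inf_lt; [exists (sups u 0); exists 0|rewrite ltrDl].
exists N => n hn; apply: (le_lt_trans _ hy); rewrite /sups /=.
apply: ub_le_sup; last by exists n.
exact/has_ubound_sdrop/bounded_fun_has_ubound.
Qed.

Lemma LI_mono u v c : bounded_fun u -> bounded_fun v ->
  (exists N, forall n, (N <= n)%N -> u n + c <= v n) -> limn_inf u + c <= limn_inf v.
Proof.
move=> hu hv [N hN]; apply/ler_addgt0Pr => e e0.
have [M hM] := LI3 e hu e0.
rewrite -lerBlDr; apply: LI1 => //; exists (maxn N M) => n.
rewrite geq_max => /andP[h1 h2].
have := hM n h2; have := hN n h1; lra.
Qed.

Lemma LS_mono u v c : bounded_fun u -> bounded_fun v ->
  (exists N, forall n, (N <= n)%N -> u n <= v n + c) -> limn_sup u <= limn_sup v + c.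
Proof.
move=> hu hv [N hN]; apply/ler_addgt0Pr => e e0.
have [M hM] := LS3 e hv e0.
rewrite -addrA (addrC c) addrA; apply: LS1 => //; exists (maxn N M) => n.
rewrite geq_max => /andP[h1 h2].
have := hM n h2; have := hN n h1; lra.
Qed.

Lemma LI_le u c : bounded_fun u -> (exists N, forall n, (N <= n)%N -> u n <= c) -> limn_inf u <= c.
Proof.
move=> hu [N hN]; apply/ler_addgt0Pr => e e0.
have [M hM] := LI3 e hu e0.
have := hM (maxn N M) (leq_maxr _ _); have := hN (maxn N M) (leq_maxl _ _).
lra.
Qed.

Lemma LS_ge u c : bounded_fun u -> (exists N, forall n, (N <= n)%N -> c <= u n) -> c <= limn_sup u.
Proof.
move=> hu [N hN]; apply/ler_addgt0Pr => e e0.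
have [M hM] := LS3 e hu e0.
have := hM (maxn N M) (leq_maxr _ _); have := hN (maxn N M) (leq_maxl _ _).
lra.
Qed.

Lemma LI_LS u : bounded_fun u -> limn_inf u <= limn_sup u.
Proof.
move=> hu; apply/ler_addgt0Pr => e e0.
have [M hM] := LS3 e hu e0; apply: LI_le => //; exists M => n /hM /ltW //.
Qed.

Lemma LI_io u c : bounded_fun u -> limn_inf u < c -> forall N, exists n, (N <= n)%N /\ u n < c.
Proof.
move=> hu hc N; apply: contrapT => hn.
have : c <= limn_inf u.
  apply: LI1 => //; exists N => n hN; rewrite leNgt; apply/negP => h; apply: hn; by exists n.
by rewrite leNgt hc.
Qed.

Lemma LS_io u c : bounded_fun u -> c < limn_sup u -> forall N, exists n, (N <= n)%N /\ c < u n.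
Proof.
move=> hu hc N; apply: contrapT => hn.
have : limn_sup u <= c.
  apply: LS1 => //; exists N => n hN; rewrite leNgt; apply/negP => h; apply: hn; by exists n.
by rewrite leNgt hc.
Qed.

End LIM.


Section Aux.
Variable R : realType.

Lemma exists_nat_gt (x : R) : exists n : nat, x < n%:R.
Proof.
exists (Num.Def.trunc `|x|).+1.
have /andP[_ h] := truncn_itv (normr_ge0 x).
exact: le_lt_trans (ler_norm x) h.
Qed.

Lemma exists_pow2 (e : R) : 0 < e -> exists n : nat, 2%:R ^- n < e.
Proof.
move=> e0; have [n hn] := exists_nat_gt e^-1.
exists n; rewrite -(invrK e) ltf_pV2 ?posrE ?exprn_gt0 ?invr_gt0 //.
apply: lt_le_trans hn _; rewrite -natrX ler_nat.
exact: ltnW (ltn_expl _ (isT : (1 < 2)%N)).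
Qed.

Lemma exists_rat (x e : R) : 0 <= x -> 0 < e ->
  exists p q : nat, x < p%:R / q.+1%:R /\ p%:R / q.+1%:R < x + e.
Proof.
move=> x0 e0; have [q hq] := exists_nat_gt e^-1.
have hq0 : 0 < q.+1%:R :> R by rewrite ltr0n.
have hx : 0 <= x * q.+1%:R by rewrite mulr_ge0 // ltW.
have /andP[h1 h2] := truncn_itv hx.
exists (Num.Def.trunc (x * q.+1%:R)).+1, q; split.
  by rewrite ltr_pdivlMr.
rewrite ltr_pdivrMr // mulrDl.
have : e^-1 < q.+1%:R by apply: (lt_trans hq); rewrite ltr_nat.
rewrite -(ltr_pM2l e0) mulfV ?gt_eqF // => he.
rewrite -addn1 natrD; lra.
Qed.

Lemma ratval_lt (A B D p q : nat) :
  (ratval A B D < p%:R / q.+1%:R :> R) = (A * q.+1 < p * D.+1 + B * q.+1)%N.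
Proof.
rewrite /ratval ltr_pdivrMr ?ltr0n // mulrAC ltr_pdivlMr ?ltr0n //.
by rewrite mulrBl ltrBlDr -!natrM -natrD ltr_nat.
Qed.

Lemma ratval_gt (A B D p q : nat) :
  (p%:R / q.+1%:R < ratval A B D :> R) = (p * D.+1 + B * q.+1 < A * q.+1)%N.
Proof.
rewrite /ratval ltr_pdivlMr ?ltr0n // mulrAC ltr_pdivrMr ?ltr0n //.
by rewrite mulrBl ltrBrDr -!natrM -natrD ltr_nat.
Qed.

End Aux.


Section Om.
Variable R : realType.
Variable omega : nat -> bool.
Local Notation pp := (path_prefix omega).

Definition cnt (S : seq bool -> bool) n : nat := (\sum_(k < n) S (pp k))%N.

Lemma sel_countE (S : seq bool -> bool) n : sel_count (R:=R) S omega n = (cnt S n)%:R.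
Proof. by rewrite /sel_count /cnt natr_sum. Qed.

Lemma cntS (S : seq bool -> bool) n : cnt S n.+1 = (cnt S n + S (pp n))%N.
Proof. by rewrite /cnt big_ord_recr. Qed.

Lemma cnt_mono (S : seq bool -> bool) m n : (m <= n)%N -> (cnt S m <= cnt S n)%N.
Proof.
move=> /subnK <-; elim: (n - m)%N => [|k IH] //=.
rewrite addSn cntS; exact: leq_trans IH (leq_addr _ _).
Qed.

Definition good (S : seq bool -> bool) :=
  selection_process S /\ (forall M : R, exists N, forall n, (N <= n)%N -> M <= sel_count S omega n).

Lemma io_count (S : seq bool -> bool) : (forall N, exists n, (N <= n)%N /\ S (pp n)) ->
  forall M : R, exists N, forall n, (N <= n)%N -> M <= sel_count S omega n.
Proof.
move=> hio.
have hk : forall k, exists N, (k <= cnt S N)%N.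
  elim=> [|k [N hN]]; first by exists 0%N.
  have [n [hn hS]] := hio N; exists n.+1; rewrite cntS hS addn1 ltnS.
  exact: leq_trans hN (@cnt_mono S _ _ hn).
move=> M; have [k hkM] := @exists_nat_gt R M; have [N hN] := hk k.
exists N => n hn; rewrite sel_countE; apply: ltW; apply: lt_le_trans hkM _.
by rewrite ler_nat; exact: leq_trans hN (@cnt_mono S _ _ hn).
Qed.

Lemma good_true : good (fun _ => true).
Proof.
split; first exact: sel_true.
by apply: io_count => N; exists N.
Qed.

Lemma good_pos (S : seq bool -> bool) : good S -> exists N, forall n, (N <= n)%N -> 0 < sel_count (R:=R) S omega n.
Proof.
move=> [_ h]; have [N hN] := h 1; exists N => n /hN; apply: lt_le_trans; exact: ltr01.
Qed.

Lemma fracB' (S : seq bool -> bool) (g : nat -> R) lo hi n : 0 < sel_count (R:=R) S omega n ->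
  (forall k, S (pp k) -> lo <= g k <= hi) ->
  lo <= (\sum_(k < n) (S (pp k))%:R * g k) / sel_count S omega n <= hi.
Proof.
move=> c0 h; rewrite ler_pdivlMr // ler_pdivrMr // /sel_count.
rewrite !mulr_sumr; apply/andP; split; apply: ler_sum => k _;
  move: (h k); case: (S (pp k)) => [/(_ isT)/andP[h1 h2]|_] /=; rewrite ?mulr1 ?mul1r ?mulr0 ?mul0r //.
Qed.

Lemma fracB (S : seq bool -> bool) (g : nat -> R) lo hi n : lo <= 0 -> 0 <= hi ->
  (forall k, S (pp k) -> lo <= g k <= hi) ->
  lo <= (\sum_(k < n) (S (pp k))%:R * g k) / sel_count S omega n <= hi.
Proof.
move=> hl hh h; have [c0|c0] := eqVneq (sel_count (R:=R) S omega n) 0.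
  by rewrite c0 invr0 mulr0 hl hh.
apply: fracB' h; rewrite lt_def c0 /= /sel_count; apply: sumr_ge0 => k _; exact: ler0n.
Qed.

Definition avg0 (S : seq bool -> bool) := sel_avg (R:=R) S omega (fun _ => 0).

Lemma avg_split (S : seq bool -> bool) f n : sel_avg S omega f n =
  avg0 S n - (\sum_(k < n) (S (pp k))%:R * f (pp k)) / sel_count S omega n.
Proof.
rewrite /avg0 /sel_avg -mulrBl; congr (_ * _); rewrite -sumrB.
by apply: eq_bigr => k _; rewrite subr0 mulrBr.
Qed.

Lemma avg0_01 (S : seq bool -> bool) n : 0 <= avg0 S n <= 1.
Proof.
rewrite /avg0 /sel_avg; apply: (@fracB S (fun k => (omega k)%:R - 0)) => // k _; rewrite subr0; case: (omega k) => /=; rewrite ?ler01 ?lexx //.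
Qed.

Lemma bnd_avg (S : seq bool -> bool) f : (forall s, 0 <= f s <= 1) -> bounded_fun (sel_avg (R:=R) S omega f).
Proof.
move=> hf; apply: (@bndK _ _ 1) => n.
have /andP[] : -1 <= sel_avg S omega f n <= 1.
  rewrite /sel_avg; apply: (@fracB S (fun k => (omega k)%:R - f (pp k))); [by rewrite lerN10|by []|].
  move=> k _; have /andP[h1 h2] := hf (pp k); case: (omega k) => /=; lra.
move=> h1 h2; rewrite ler_norml; lra.
Qed.

Lemma bnd_avg0 (S : seq bool -> bool) : bounded_fun (avg0 S).
Proof. by apply: bnd_avg => _; rewrite lexx ler01. Qed.

Lemma avg_const (S : seq bool -> bool) a : good S -> exists N, forall n, (N <= n)%N ->
  sel_avg S omega (fun _ => a) n = avg0 S n - a.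
Proof.
move=> /good_pos [N hN]; exists N => n /hN c0.
rewrite avg_split -mulr_suml -/(sel_count S omega n) mulrC mulKf ?gt_eqF //.
Qed.

End Om.


Section Om2.
Variable R : realType.
Variable omega : nat -> bool.
Local Notation pp := (path_prefix omega).
Local Notation good := (@good R omega).
Local Notation avg0 := (@avg0 R omega).

Definition ell (S : seq bool -> bool) := limn_inf (avg0 S).
Definition ups (S : seq bool -> bool) := limn_sup (avg0 S).

Lemma ell_01 S : 0 <= ell S <= 1.
Proof.
apply/andP; split.
  by apply: LI1; [exact: bnd_avg0|exists 0%N => n _; have /andP[] := avg0_01 R omega S n].
by apply: LI_le; [exact: bnd_avg0|exists 0%N => n _; have /andP[] := avg0_01 R omega S n].
Qed.

Lemma ups_01 S : 0 <= ups S <= 1.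
Proof.
apply/andP; split.
  by apply: LS_ge; [exact: bnd_avg0|exists 0%N => n _; have /andP[] := avg0_01 R omega S n].
by apply: LS1; [exact: bnd_avg0|exists 0%N => n _; have /andP[] := avg0_01 R omega S n].
Qed.

Lemma ell_ups S : ell S <= ups S.
Proof. exact/LI_LS/bnd_avg0. Qed.

Lemma bnd_cst S (a : R) : 0 <= a <= 1 -> bounded_fun (sel_avg S omega (fun _ => a)).
Proof. by move=> ha; apply: bnd_avg. Qed.

Lemma CH_const (a b : R) : 0 <= a <= 1 -> 0 <= b <= 1 ->
  CH_random (fun _ => (a, b)) omega <-> forall S, good S -> a <= ell S /\ ups S <= b.
Proof.
move=> ha hb; split.
  move=> hCH S hS; have [h1 h2] := hCH S hS.1 hS.2; simpl in h1, h2.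
  have [N hN] := avg_const a hS; have [N' hN'] := avg_const b hS.
  split.
    have : limn_inf (sel_avg S omega (fun _ => a)) + a <= ell S.
      apply: LI_mono; [exact: bnd_cst|exact: bnd_avg0|].
      by exists N => n /hN ->; rewrite subrK.
    lra.
  have : ups S <= limn_sup (sel_avg S omega (fun _ => b)) + b.
    apply: LS_mono; [exact: bnd_avg0|exact: bnd_cst|].
    by exists N' => n /hN' ->; rewrite subrK.
  lra.
move=> h S hsel hcnt; have hS : good S by [].
have [h1 h2] := h S hS; simpl.
have [N hN] := avg_const a hS; have [N' hN'] := avg_const b hS.
split.
  have : ell S + - a <= limn_inf (sel_avg S omega (fun _ => a)).
    apply: LI_mono; [exact: bnd_avg0|exact: bnd_cst|].
    by exists N => n /hN ->.
  lra.
have : limn_sup (sel_avg S omega (fun _ => b)) <= ups S + - b.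
  apply: LS_mono; [exact: bnd_cst|exact: bnd_avg0|].
  by exists N' => n /hN' ->.
lra.
Qed.

Definition Lset : set R := [set x | exists2 S, good S & x = ell S]%classic.
Definition Uset : set R := [set x | exists2 S, good S & x = ups S]%classic.
Definition Lo := inf Lset.
Definition Up := sup Uset.

Lemma Lset0 : (Lset !=set0)%classic.
Proof. by exists (ell (fun _ => true)); exists (fun _ => true) => //; exact: good_true. Qed.
Lemma Uset0 : (Uset !=set0)%classic.
Proof. by exists (ups (fun _ => true)); exists (fun _ => true) => //; exact: good_true. Qed.

Lemma Lset_lb : has_lbound Lset.
Proof. by exists 0 => _ [S _ ->]; have /andP[] := ell_01 S. Qed.
Lemma Uset_ub : has_ubound Uset.
Proof. by exists 1 => _ [S _ ->]; have /andP[] := ups_01 S. Qed.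

Lemma Lo_le S : good S -> Lo <= ell S.
Proof. by move=> hS; apply: ge_inf; [exact: Lset_lb|exists S]. Qed.
Lemma Up_ge S : good S -> ups S <= Up.
Proof. by move=> hS; apply: ub_le_sup; [exact: Uset_ub|exists S]. Qed.

Lemma Lo_01 : 0 <= Lo <= 1.
Proof.
apply/andP; split.
  by apply: lb_le_inf; [exact: Lset0| move=> _ [S _ ->]; have /andP[] := ell_01 S].
apply: le_trans (Lo_le (good_true R omega)) _; by have /andP[] := ell_01 (fun _ => true).
Qed.

Lemma Up_01 : 0 <= Up <= 1.
Proof.
apply/andP; split.
  apply: le_trans _ (Up_ge (good_true R omega)); by have /andP[] := ups_01 (fun _ => true).
by apply: ge_sup; [exact: Uset0| move=> _ [S _ ->]; have /andP[] := ups_01 S].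
Qed.

Lemma in_ICH_Lo : in_ICH omega Lo.
Proof.
move=> [a b] [[/= a0 [ab b1]] hCH].
have ha : 0 <= a <= 1 by apply/andP; split => //; exact: le_trans b1.
have hb : 0 <= b <= 1 by apply/andP; split => //; exact: le_trans ab.
have h := (CH_const a b ha hb).1 hCH.
apply/andP; split.
  by apply: lb_le_inf Lset0 _ => _ [S hS ->]; exact: (h S hS).1.
apply: le_trans (Lo_le (good_true R omega)) _; apply: le_trans (ell_ups _) _.
exact: (h _ (good_true R omega)).2.
Qed.

Lemma Lo_min x : in_ICH omega x -> Lo <= x.
Proof.
have /andP[l0 l1] := Lo_01.
move=> hx; have hI : ICH_family omega (Lo, 1).
  split; first by split => //=; split.
  apply/(CH_const Lo 1); [exact/andP|by rewrite ler01 lexx|].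
  move=> S hS; split; first exact: Lo_le.
  by have /andP[] := ups_01 S.
by have /andP[] := hx _ hI.
Qed.

Lemma in_ICH_Up : in_ICH omega Up.
Proof.
move=> [a b] [[/= a0 [ab b1]] hCH].
have ha : 0 <= a <= 1 by apply/andP; split => //; exact: le_trans b1.
have hb : 0 <= b <= 1 by apply/andP; split => //; exact: le_trans ab.
have h := (CH_const a b ha hb).1 hCH.
apply/andP; split; last first.
  by apply: ge_sup Uset0 _ => _ [S hS ->]; exact: (h S hS).2.
apply: le_trans _ (Up_ge (good_true R omega)); apply: le_trans _ (ell_ups _).
exact: (h _ (good_true R omega)).1.
Qed.

Lemma Up_max x : in_ICH omega x -> x <= Up.
Proof.
have /andP[u0 u1] := Up_01.
move=> hx; have hI : ICH_family omega (0, Up).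
  split; first by split => //=; split.
  apply/(CH_const 0 Up); [by rewrite lexx ler01|exact/andP|].
  move=> S hS; split; last exact: Up_ge.
  by have /andP[] := ell_01 S.
by have /andP[] := hx _ hI.
Qed.

End Om2.


Section Om3.
Variable R : realType.
Variable omega : nat -> bool.
Local Notation pp := (path_prefix omega).

Lemma main_lo (phi : seq bool -> R * R) : forecasting_system phi ->
  computable_real_fun (fun s => (phi s).2) -> CH_random phi omega ->
  Lo R omega <= limn_inf (fun n => (phi (pp n)).2).
Proof.
move=> hfs hc hCH.
have hphi s : 0 <= (phi s).1 /\ (phi s).1 <= (phi s).2 /\ (phi s).2 <= 1 := hfs s.
set g := fun n => (phi (pp n)).2.
have hg : bounded_fun g.
  apply: (@bndK _ _ 1) => n; have [h1 [h2 h3]] := hphi (pp n); rewrite ler_norml; rewrite /g; lra.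
rewrite leNgt; apply/negP => hlt.
set lam := limn_inf g in hlt.
have lam0 : 0 <= lam.
  apply: LI1 => //; exists 0%N => n _; have [h1 [h2 h3]] := hphi (pp n); rewrite /g; lra.
set del := (Lo R omega - lam) / 5%:R.
have del0 : 0 < del by rewrite divr_gt0 // subr_gt0.
have hdel : Lo R omega = lam + 5%:R * del by rewrite /del mulrC mulfVK ?pnatr_eq0 //; lra.
have [N0 hN0] : exists n : nat, 2%:R ^- n < del by apply: exists_pow2.
have [p [q [hp1 hp2]]] : exists p q : nat, lam + 2%:R * del < p%:R / q.+1%:R /\
    p%:R / q.+1%:R < lam + 2%:R * del + del.
  apply: exists_rat => //; lra.
have [a [b [d [ra rb rd hab]]]] := hc.
set S := fun s => (a s N0 * q.+1 < p * (d s N0).+1 + b s N0 * q.+1)%N.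
have [eps [rr [th [heps hth1 hth2 hS happ]]]] : exists eps (rr : seq bool -> R) th,
   [/\ eps < del, lam + 2%:R * del < th, th < lam + 2%:R * del + del,
   (forall s, S s = (rr s < th)) & (forall s, - eps < (phi s).2 - rr s < eps)].
  exists (2%:R ^- N0), (fun s => ratval (a s N0) (b s N0) (d s N0)), (p%:R / q.+1%:R).
  split => //; first by move=> s; rewrite /S ratval_lt.
  by move=> s; rewrite -ltr_norml; exact: hab.
have hi s : S s -> (phi s).2 <= Lo R omega - del.
  rewrite hS => h; have /andP[h1 h2] := happ s; clearbody del; lra.
have hio : forall N, exists n, (N <= n)%N /\ S (pp n).
  move=> N; have [n [hn hgn]] : exists n, (N <= n)%N /\ g n < lam + del.
    apply: LI_io => //; rewrite -/lam; lra.
  exists n; split => //; rewrite hS; have /andP[h1 h2] := happ (pp n); rewrite /g in hgn; clearbody del; lra.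
have hsel : selection_process S by exact: sel_rec.
have hcnt : forall M : R, exists N, forall n, (N <= n)%N -> M <= sel_count S omega n.
  exact: io_count.
have [_ hsup] := hCH S hsel hcnt.
have hgood : good R omega S by [].
have hw : bounded_fun (sel_avg S omega (fun s => (phi s).2)).
  apply: bnd_avg => s; have [h1 [h2 h3]] := hphi s; apply/andP; split; lra.
have : ups R omega S <= limn_sup (sel_avg S omega (fun s => (phi s).2)) + (Lo R omega - del).
  apply: LS_mono => //; first exact: bnd_avg0.
  exists 0%N => n _; rewrite avg_split.
  have /andP[_ h] : 0 <= (\sum_(k < n) (S (pp k))%:R * (phi (pp k)).2) / sel_count S omega n <= Lo R omega - del.
    apply: (@fracB R omega S (fun k => (phi (pp k)).2)); [by []|clearbody del; lra|].
    move=> k hk; have [h1 [h2 h3]] := hphi (pp k); have := hi _ hk; move=> h4; apply/andP; split; lra.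
  rewrite /avg0; lra.
have := @Lo_le R omega S hgood; have := @ell_ups R omega S.
rewrite /ell /ups; lra.
Qed.

Lemma main_up (phi : seq bool -> R * R) : forecasting_system phi ->
  computable_real_fun (fun s => (phi s).1) -> CH_random phi omega ->
  limn_sup (fun n => (phi (pp n)).1) <= Up R omega.
Proof.
move=> hfs hc hCH.
have hphi s : 0 <= (phi s).1 /\ (phi s).1 <= (phi s).2 /\ (phi s).2 <= 1 := hfs s.
set g := fun n => (phi (pp n)).1.
have hg : bounded_fun g.
  apply: (@bndK _ _ 1) => n; have [h1 [h2 h3]] := hphi (pp n); rewrite ler_norml; rewrite /g; lra.
rewrite leNgt; apply/negP => hlt.
set lam := limn_sup g in hlt.
have u0 : 0 <= Up R omega by have /andP[] := Up_01 R omega.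
set del := (lam - Up R omega) / 5%:R.
have del0 : 0 < del by rewrite divr_gt0 // subr_gt0.
have hdel : lam = Up R omega + 5%:R * del by rewrite /del mulrC mulfVK ?pnatr_eq0 //; lra.
have [N0 hN0] : exists n : nat, 2%:R ^- n < del by apply: exists_pow2.
have [p [q [hp1 hp2]]] : exists p q : nat, Up R omega + 2%:R * del < p%:R / q.+1%:R /\
    p%:R / q.+1%:R < Up R omega + 2%:R * del + del.
  apply: exists_rat => //; clearbody del; lra.
have [a [b [d [ra rb rd hab]]]] := hc.
set S := fun s => (p * (d s N0).+1 + b s N0 * q.+1 < a s N0 * q.+1)%N.
have [eps [rr [th [heps hth1 hth2 hS happ]]]] : exists eps (rr : seq bool -> R) th,
   [/\ eps < del, Up R omega + 2%:R * del < th, th < Up R omega + 2%:R * del + del,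
   (forall s, S s = (th < rr s)) & (forall s, - eps < (phi s).1 - rr s < eps)].
  exists (2%:R ^- N0), (fun s => ratval (a s N0) (b s N0) (d s N0)), (p%:R / q.+1%:R).
  split => //; first by move=> s; rewrite /S ratval_gt.
  by move=> s; rewrite -ltr_norml; exact: hab.
have hi s : S s -> Up R omega + del <= (phi s).1.
  rewrite hS => h; have /andP[h1 h2] := happ s; clearbody del; lra.
have hio : forall N, exists n, (N <= n)%N /\ S (pp n).
  move=> N; have [n [hn hgn]] : exists n, (N <= n)%N /\ lam - del < g n.
    by apply: LS_io => //; rewrite -/lam; lra.
  exists n; split => //; rewrite hS; have /andP[h1 h2] := happ (pp n); rewrite /g in hgn; clearbody del; lra.
have hsel : selection_process S by exact: sel_rec2.
have hcnt : forall M : R, exists N, forall n, (N <= n)%N -> M <= sel_count S omega n.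
  exact: io_count.
have [hinf _] := hCH S hsel hcnt.
have hgood : good R omega S by [].
have hw : bounded_fun (sel_avg S omega (fun s => (phi s).1)).
  apply: bnd_avg => s; have [h1 [h2 h3]] := hphi s; apply/andP; split; lra.
have : limn_inf (sel_avg S omega (fun s => (phi s).1)) + (Up R omega + del) <= ell R omega S.
  apply: LI_mono => //; first exact: bnd_avg0.
  have [N hN] := @good_pos R omega S hgood.
  exists N => n hn; rewrite avg_split.
  have /andP[h _] : Up R omega + del <= (\sum_(k < n) (S (pp k))%:R * (phi (pp k)).1) / sel_count S omega n <= 1.
    apply: (@fracB' R omega S (fun k => (phi (pp k)).1)); first exact: hN.
    move=> k hk; have [h1 [h2 h3]] := hphi (pp k); have := hi _ hk; move=> h4; apply/andP; split; lra.
  rewrite /avg0; lra.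
have := @Up_ge R omega S hgood; have := @ell_ups R omega S.
rewrite /ell /ups; lra.
Qed.

End Om3.


Theorem proposition14 (R : realType) (phi : seq bool -> R * R) (omega : nat -> bool) :
  forecasting_system phi -> computable_fs phi -> CH_random phi omega ->
  (exists m : R, [/\ in_ICH omega m, (forall x, in_ICH omega x -> m <= x) &
      m <= limn_inf (fun n => (phi (path_prefix omega n)).2)]) /\
  (exists M : R, [/\ in_ICH omega M, (forall x, in_ICH omega x -> x <= M) &
      limn_sup (fun n => (phi (path_prefix omega n)).1) <= M]).
Proof.
move=> hfs [hc1 hc2] hCH; split.
  exists (Lo R omega); split; [exact: in_ICH_Lo|exact: Lo_min|exact: main_lo].
exists (Up R omega); split; [exact: in_ICH_Up|exact: Up_max|exact: main_up].
Qed.
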